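(* Let $n$ be even. Take $n$ oriented triangles, each labeled and identified with the standard oriented 2-simplex, and pair their $3n$ sides by a uniformly random perfect matching; glue each pair of sides by the unique identification compatible with the orientations, producing a closed oriented (possibly disconnected) surface $\Sigma$. Then the expected number of vertices of $\Sigma$ is at most $\tfrac{3}{2}\log(n)+6$ (natural logarithm).
   Context: This random gluing produces the uniform distribution on the set of labeled oriented triangulated surfaces built from $n$ triangles (triangulations here are just assemblages of triangles with sides glued in pairs, not necessarily simplicial complexes). The vertices of $\Sigma$ are the equivalence classes of triangle corners after gluing. *)

(* Defs.v *)
From mathcomp Require Import all_boot all_order all_algebra all_fingroup.
From mathcomp Require Import all_classical all_reals all_analysis.
Set Implicit Arguments. Unset Strict Implicit. Unset Printing Implicit Defensive.

(* Triangle t has corners (t,0),(t,1),(t,2) in counterclockwise order;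
   side (t,i) is the oriented side going from corner (t,i) to corner (t,i+1 mod 3). *)
Definition side (n : nat) := ('I_n * 'I_3)%type.
Definition corner (n : nat) := ('I_n * 'I_3)%type.

Definition is_matching (n : nat) (m : {perm side n}) : bool :=
  [forall x, (m x != x) && (m (m x) == x)].

Definition matchings (n : nat) : {set {perm side n}} :=
  [set m | is_matching m].

(* Orientation-compatible gluing of side x = (t,i) with side y = (s,j):
   corner (t,i) ~ corner (s,j+1) and corner (t,i+1) ~ corner (s,j). *)
Definition glue_rel (n : nat) (m : {perm side n}) : rel (corner n) :=
  fun c d => [exists x : side n,
    ((c == (x.1, x.2)) && (d == ((m x).1, ordS (m x).2)))
    || ((c == (x.1, ordS x.2)) && (d == ((m x).1, (m x).2)))].

Definition sym_glue_rel (n : nat) (m : {perm side n}) : rel (corner n) :=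
  fun c d => glue_rel m c d || glue_rel m d c.

Definition vertices (n : nat) (m : {perm side n}) : {set {set corner n}} :=
  [set [set d | connect (sym_glue_rel m) c d] | c : corner n].

Definition num_vertices (n : nat) (m : {perm side n}) : nat := #|vertices m|.

Definition expected_vertices (R : realType) (n : nat) : R :=
  ((\sum_(m in matchings n) (num_vertices m)%:R) / (#|matchings n|)%:R)%R.

(* Main.v *)
Require Import Defs.
From mathcomp Require Import all_boot all_order all_algebra all_fingroup.
From mathcomp Require Import all_classical all_reals all_analysis.
From mathcomp Require Import zify ring lra.
Import Order.TTheory GRing.Theory Num.Theory.
Set Implicit Arguments. Unset Strict Implicit. Unset Printing Implicit Defensive.

Section Comb.
Variable T : finType.
Implicit Types (s m p : {perm T}) (D : {set T}) (x y z : T).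

Definition matchD D := [set m : {perm T} | [forall z, if z \in D then (m z != z) && (m (m z) == z) else m z == z]].

Lemma matchDP D m : reflect ((forall z, z \in D -> m z != z /\ m (m z) = z) /\ (forall z, z \notin D -> m z = z)) (m \in matchD D).
Proof.
rewrite inE; apply: (iffP forallP) => [H|[H1 H2] z].
  split=> z Hz; have := H z; rewrite ?Hz ?(negbTE Hz).
    by case/andP=> -> /eqP.
  by move/eqP.
case: ifP => Hz; first by have [-> ->] := H1 z Hz; rewrite eqxx.
by rewrite H2 ?Hz.
Qed.

Lemma matchD_in D m x : m \in matchD D -> x \in D -> m x \in D :\ x.
Proof.
move=> /matchDP[H1 H2] Hx; have [ne inv] := H1 x Hx.
rewrite !inE ne /=; apply: contraT => Hn.
by move: ne; rewrite -{2}inv (H2 _ Hn) eqxx.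
Qed.

Lemma match_split D x y m : x \in D -> y \in D :\ x ->
  (m \in matchD D) && (m x == y) = ((tperm x y * m)%g \in matchD (D :\ x :\ y)).
Proof.
move=> Hx /setD1P[nyx Hy].
apply/andP/matchDP => [[/matchDP[H1 H2] /eqP mx]|[H1 H2]].
  have my : m y = x by rewrite -mx (proj2 (H1 x Hx)).
  split=> z; rewrite !inE ?negb_and ?negbK.
    case/and3P=> nzy nzx Hz; rewrite !permM tpermD 1?eq_sym //.
    have [ne inv] := H1 z Hz.
    have mzx : m z != x by apply: contraNneq nzy => e; rewrite -inv e mx.
    have mzy : m z != y by apply: contraNneq nzx => e; rewrite -inv e my.
    by rewrite tpermD 1?eq_sym // inv ne.
  rewrite permM; case/or3P => [/eqP->|/eqP->|Hz].
  - by rewrite tpermR.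
  - by rewrite tpermL.
  have zx : z != x by apply: contraNneq Hz => ->.
  have zy : z != y by apply: contraNneq Hz => ->.
  by rewrite tpermD 1?eq_sym // H2.
have m'y : (tperm x y * m)%g y = y by rewrite H2 // !inE eqxx.
have m'x : (tperm x y * m)%g x = x by rewrite H2 // !inE eqxx /= andbF.
have mx : m x = y by move: m'y; rewrite permM tpermR.
have my : m y = x by move: m'x; rewrite permM tpermL.
split; last by rewrite mx.
apply/matchDP; split=> z Hz.
  case: (eqVneq z x) => [->|zx]; first by rewrite mx my nyx.
  case: (eqVneq z y) => [->|zy]; first by rewrite my mx eq_sym nyx.
  have Hz' : z \in D :\ x :\ y by rewrite !inE zx zy Hz.
  have [ne inv] := H1 z Hz'.
  rewrite !permM in ne inv; rewrite tpermD 1?eq_sym // in ne inv.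
  have Hmz : m z \in D :\ x :\ y.
    apply: contraT => Hn; have := H2 _ Hn; rewrite permM => e.
    by move: ne; rewrite -e inv eqxx.
  move: Hmz; rewrite !inE => /and3P[a b _].
  rewrite tpermD 1?eq_sym // in inv.
  by split=> //; rewrite eq_sym.
have zx : z != x by apply: contraNneq Hz => ->.
have zy : z != y by apply: contraNneq Hz => ->.
have := H2 z; rewrite !inE (negbTE Hz) !andbF => /(_ isT).
by rewrite permM tpermD 1?eq_sym.
Qed.


Ltac fin := repeat match goal with H : is_true (?a != ?b) |- context [?a == ?b] => rewrite (negbTE H) | H : is_true (?a != ?b) |- context [?b == ?a] => rewrite eq_sym (negbTE H) end;
  repeat match goal with H : is_true (_ <= _)%N |- _ => move: H end;
  repeat match goal with |- context [?a == ?b] => case: (a == b) end; done.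

Lemma bool_ineq s x y s1 a s2 b : x != y -> s1 = (tperm x y * s)%g ->
 a = (s1^-1)%g x -> s2 = (tperm x a * s1)%g -> b = (s2^-1)%g y ->
 (s2 y == y) + ((a != x) && (s1 x == a)) + ((b != y) && (s2 y == b))
   <= (s x == x) + (s y == y) + (s x == y) + (s (s x) == y) + (s (s y) == x).
Proof.
move=> nxy s1D aD s2D bD.
have s1E z : s1 z = s (tperm x y z) by rewrite s1D permM.
have aE : a = tperm x y ((s^-1)%g x) by rewrite aD s1D invMg permM tpermV.
have s2E z : s2 z = s1 (tperm x a z) by rewrite s2D permM.
have bE : b = tperm x a (tperm x y ((s^-1)%g y)).
  by rewrite bD s2D invMg permM tpermV s1D invMg permM tpermV.
rewrite {s1D s2D aD bD} !s2E !s1E.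
have su : s ((s^-1)%g x) = x by rewrite permKV.
have sv : s ((s^-1)%g y) = y by rewrite permKV.
move: su sv aE bE; set u := (s^-1)%g x; set v := (s^-1)%g y => su sv aE bE.
clearbody u v.
have sinj := @perm_inj _ s.
have imp (b1 b2 : bool) : (b1 -> b2) -> (b1 <= b2)%N by case: b1 b2 => [] [] // /(_ isT).
have nxy' : (x == y) = false by apply/negbTE.
have nyx' : (y == x) = false by rewrite eq_sym nxy'.
case: (eqVneq u x) => [ux|nux].
  subst u; rewrite tpermL in aE; subst a; rewrite tpermK in bE; subst b.
  rewrite tpermR tpermL !su eqxx nxy' nyx'.
  have h := imp (s y == y) (v == y) (fun e => introT eqP (sinj _ _ (etrans sv (esym (eqP e))))).
  fin.
case: (eqVneq u y) => [uy|nuy].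
  subst u; rewrite tpermR in aE; subst a.
  rewrite tperm1 !perm1 tpermR eqxx /= in bE *.
  case: (eqVneq v x) => [vx|nvx].
    subst v; rewrite tpermL in bE; subst b; rewrite eqxx /=.
    have -> : (s x == y) = true by rewrite sv eqxx.
    fin.
  have nvy : v != y by apply/eqP => vy; move: sv; rewrite vy su => e; rewrite e eqxx in nxy.
  rewrite tpermD 1?eq_sym // in bE; subst b.
  have h := imp (s x == v) (s (s x) == y) (fun e => introT eqP (etrans (f_equal s (eqP e)) sv)).
  fin.
have xnu : x != u by rewrite eq_sym.
have ynu : y != u by rewrite eq_sym.
rewrite (tpermD xnu ynu) in aE; subst a.
rewrite (tpermD nxy nuy) tpermR tpermL.
have h1 := imp (s y == u) (s (s y) == x) (fun e => introT eqP (etrans (f_equal s (eqP e)) su)).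
case: (eqVneq v x) => [vx|nvx].
  subst v; rewrite tpermL (tpermD nxy nuy) in bE; subst b; rewrite eqxx.
  have -> : (s x == y) = true by rewrite sv eqxx.
  fin.
case: (eqVneq v y) => [vy|nvy].
  subst v; rewrite tpermR tpermL in bE; subst b.
  have -> : (s x == y) = false by apply/eqP => e; move: nxy; rewrite -(sinj _ _ (etrans e (esym sv))) eqxx.
  rewrite sv eqxx.
  fin.
have nvu : v != u by apply/eqP => e; move: su; rewrite -e sv => e'; rewrite e' eqxx in nxy.
have xnv : x != v by rewrite eq_sym.
have ynv : y != v by rewrite eq_sym.
have unv : u != v by rewrite eq_sym.
rewrite (tpermD xnv ynv) (tpermD xnv unv) in bE; subst b.
have h2 := imp (s x == v) (s (s x) == y) (fun e => introT eqP (etrans (f_equal s (eqP e)) sv)).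
fin.
Qed.

Lemma decomp (R : Type) (idx : R) (op : Monoid.com_law idx) D x (F : {perm T} -> R) :
  x \in D ->
  \big[op/idx]_(m in matchD D) F m =
  \big[op/idx]_(y in D :\ x) \big[op/idx]_(m in matchD (D :\ x :\ y)) F (tperm x y * m)%g.
Proof.
move=> Hx.
rewrite (partition_big (fun m : {perm T} => m x) (mem (D :\ x))) /=; last first.
  by move=> m Hm; exact: matchD_in.
apply: eq_bigr => y Hy.
rewrite -(big_imset _ (h := mulg (tperm x y))) /=; last by move=> m1 m2 _ _; apply: mulgI.
apply: eq_bigl => m; rewrite match_split //.
apply/idP/imsetP => [H|[k Hk ->]].
  by exists (tperm x y * m)%g => //; rewrite mulgA tperm2 mul1g.
by rewrite mulgA tperm2 mul1g.
Qed.

Lemma W_excise p c : #|porbits (tperm c ((p^-1)%g c) * p)%g| = #|porbits p| + (p c != c).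
Proof.
have H := porbits_mul_tperm p c ((p^-1)%g c).
have Hm : c \in porbit p ((p^-1)%g c).
  by have := mem_porbit p 1 ((p^-1)%g c); rewrite expg1 permKV.
rewrite /= Hm /= addn0 in H; rewrite H.
suff -> : (c != (p^-1)%g c) = (p c != c) by [].
case: (eqVneq (p c) c) => e.
  by rewrite -{2}e permK eqxx.
apply/eqP => e'; move: e.
by rewrite {1}e' permKV eqxx.
Qed.

Lemma mul_tperm_fix (g : {perm T}) c a : g c = c -> (g * tperm c a = tperm c ((g^-1)%g a) * g)%g.
Proof.
move=> gc; apply/permP => z; rewrite !permM.
case: (tpermP c ((g^-1)%g a) z) => [->|->|zc za].
- by rewrite gc tpermL permKV.
- by rewrite permKV tpermR.
have h1 : c != g z.
  by apply/eqP => e; apply: zc; apply: (@perm_inj _ g); rewrite -e gc.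
have h2 : a != g z.
  by apply/eqP => e; apply: za; rewrite e permK.
by rewrite tpermD.
Qed.

Lemma W_step (g : {perm T}) p c : g c = c ->
  #|porbits (g * (tperm c ((p^-1)%g c) * p))%g| = #|porbits (g * p)%g| + (p c != c).
Proof.
move=> gc; rewrite mulgA mul_tperm_fix //.
have -> : (g^-1)%g ((p^-1)%g c) = ((g * p)^-1)%g c by rewrite invMg permM.
by rewrite -mulgA W_excise permM gc.
Qed.

Definition fixD s D := (\sum_(z in D) (s z == z))%N.

Lemma fix1 s D x y : x \in D -> y \in D -> x != y ->
  (fixD (tperm x y * s)%g D + (s x == x) + (s y == y) = fixD s D + (s y == x) + (s x == y))%N.
Proof.
move=> Hx Hy nxy.
have Hy' : (y \in D) && (y != x) by rewrite Hy eq_sym nxy.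
rewrite /fixD (bigD1 x Hx) (bigD1 y Hy') /= (bigD1 x Hx) (bigD1 y Hy') /=.
rewrite !permM tpermL tpermR.
rewrite (eq_bigr (fun z => nat_of_bool (s z == z))); last first.
  move=> z /andP[/andP[_ zx] zy]; rewrite permM tpermD // eq_sym //.
lia.
Qed.

Lemma fix3 s D c : c \in D -> fixD s D = ((s c == c) + fixD s (D :\ c))%N.
Proof.
move=> Hc; rewrite /fixD (bigD1 c Hc); congr (_ + _).
by apply: eq_bigl => z; rewrite !inE andbC.
Qed.

Lemma fix2 p D c : c \notin D ->
  (fixD (tperm c ((p^-1)%g c) * p)%g D <= fixD p D + (((p^-1)%g c != c) && (p c == (p^-1)%g c)))%N.
Proof.
move=> Hc; set a := (p^-1)%g c.
have qE z : z != c -> z != a -> (tperm c a * p)%g z = p z.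
  by move=> zc za; rewrite permM tpermD // eq_sym.
case: (boolP (a \in D)) => Ha; last first.
  rewrite /fixD (eq_bigr (fun z => nat_of_bool (p z == z))) ?leq_addr // => z Hz.
  have zc : z != c by apply: contraNneq Hc => <-.
  by rewrite qE //; apply: contraNneq Ha => <-.
rewrite /fixD (bigD1 a Ha) (bigD1 a Ha) /=.
rewrite (eq_bigr (fun z => nat_of_bool (p z == z))); last first.
  move=> z /andP[Hz za].
  have zc : z != c by apply: contraNneq Hc => <-.
  by rewrite qE.
rewrite permM tpermR.
case: (eqVneq a c) => [ac|nac]; first by move: Hc; rewrite -ac Ha.
rewrite /=; lia.
Qed.

Definition sig1 s x y := (tperm x y * s)%g.
Definition sig2 s x y := (tperm x (((sig1 s x y)^-1)%g x) * sig1 s x y)%g.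
Definition sig3 s x y := (tperm y (((sig2 s x y)^-1)%g y) * sig2 s x y)%g.

Lemma step_fix s D x y : x \in D -> y \in D :\ x ->
  (fixD (sig3 s x y) (D :\ x :\ y) + 4 <= fixD s D + (2 * (s x == y) + 2 * (s y == x) + (s (s x) == y) + (s (s y) == x))
     + 2 * ((s y != x) + (sig2 s x y y != y)))%N.
Proof.
move=> Hx Hy; have /setD1P[nyx Hy0] := Hy.
have nxy : x != y by rewrite eq_sym.
have h1 := fix1 s Hx Hy0 nxy.
have yn : y \notin D :\ x :\ y by rewrite !inE eqxx.
have h2 := @fix2 (sig2 s x y) (D :\ x :\ y) y yn.
have h3 := fix3 (sig2 s x y) Hy.
have xn : x \notin D :\ x by rewrite !inE eqxx.
have h4 := @fix2 (sig1 s x y) (D :\ x) x xn.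
have h5 := fix3 (sig1 s x y) Hx.
have hb := @bool_ineq s x y (sig1 s x y) (((sig1 s x y)^-1)%g x) (sig2 s x y) (((sig2 s x y)^-1)%g y) nxy erefl erefl erefl erefl.
have e1 : sig1 s x y x = s y by rewrite /sig1 permM tpermL.
rewrite -/(sig1 s x y) -/(sig2 s x y) -/(sig3 s x y) in h1 h2 h4.
rewrite e1 in h4 h5 hb.
have n1 : ((s y != x) + (s y == x) = 1)%N by case: (_ == _).
have n2 : ((sig2 s x y y != y) + (sig2 s x y y == y) = 1)%N by case: (_ == _).
move: h1 h2 h3 h4 h5 hb n1 n2.
repeat match goal with |- context [nat_of_bool ?b] => let v := fresh "v" in move: (nat_of_bool b) => v end.
lia.
Qed.

Lemma W_decomp s m x y : m x = x -> m y = y ->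
  (#|porbits (tperm x y * m * s)%g| + ((s y != x) + (sig2 s x y y != y)) = #|porbits (m * sig3 s x y)%g|)%N.
Proof.
move=> mx my.
have minv : (m^-1)%g y = y by rewrite -{1}my permK.
have -> : (tperm x y * m = m * tperm x y)%g by rewrite mul_tperm_fix // minv.
rewrite -mulgA -/(sig1 s x y).
rewrite /sig3 W_step // /sig2 W_step //.
have e1 : sig1 s x y x = s y by rewrite /sig1 permM tpermL.
by rewrite e1 addnA.
Qed.

Lemma sum_eq_le1 (A : {set T}) a : (\sum_(y in A) (y == a) <= 1)%N.
Proof.
case: (boolP (a \in A)) => Ha.
  rewrite (bigD1 a Ha) eqxx big1 // => z /andP[_ za]; by rewrite (negbTE za).
by rewrite big1 // => z Hz; case: eqP => // e; rewrite -e Hz in Ha.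
Qed.

Lemma sum_eq_le2 (A : {set T}) a : (\sum_(y in A) (2 * (y == a)) <= 2)%N.
Proof.
case: (boolP (a \in A)) => Ha.
  rewrite (bigD1 a Ha) eqxx big1 // => z /andP[_ za]; by rewrite (negbTE za).
by rewrite big1 // => z Hz; case: eqP => // e; rewrite -e Hz in Ha.
Qed.

Lemma sumB s x (A : {set T}) :
  (\sum_(y in A) (2 * (s x == y) + 2 * (s y == x) + (s (s x) == y) + (s (s y) == x)) <= 6)%N.
Proof.
rewrite (eq_bigr (fun y => 2 * (y == s x) + 2 * (y == (s^-1)%g x) + (y == s (s x)) + (y == (s^-1)%g ((s^-1)%g x))))%N; last first.
  by move=> y _; rewrite !(eq_sym (s _) y) !(canF_eq (permK s)).

rewrite !bigop.big_split /= !big1_eq.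
have := sum_eq_le1 A (s x); have := sum_eq_le1 A ((s^-1)%g x).
have := sum_eq_le1 A (s (s x)); have := sum_eq_le1 A ((s^-1)%g ((s^-1)%g x)).
move=> h1 h2 h3 h4; lia.
Qed.

Fixpoint cm (k : nat) : nat := match k with 0 => 1 | 1 => 0 | k'.+2 => k'.+1 * cm k' end.

Lemma matchD0 D : #|D| = 0 -> matchD D = [set (1%g : {perm T})]%SET.
Proof.
move/eqP; rewrite cards_eq0 => /eqP ->.
apply/setP => m; rewrite finset.in_set1; apply/matchDP/eqP => [[_ H]|->].
  by apply/permP => z; rewrite perm1 H ?inE.
by split=> z; rewrite ?inE // perm1.
Qed.

Lemma card_matchD D : #|matchD D| = cm #|D|.
Proof.
move Hk: #|D| => k; elim/ltn_ind: k D Hk => k IH D Hk.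
case: k IH Hk => [|k] IH Hk; first by rewrite matchD0 // cards1.
have [x Hx] : exists x, x \in D by apply/set0Pn; rewrite -card_gt0 Hk.
rewrite -sum1_card (decomp _ _ Hx).
have HDx : #|D :\ x| = k by move: Hk; rewrite (cardsD1 x D) Hx add1n => -[].
rewrite (eq_bigr (fun _ => cm k.-1)); last first.
  move=> y Hy; rewrite sum1_card (IH k.-1) //; first by case: (k) HDx => //.
  by move: HDx; rewrite (cardsD1 y (D :\ x)) Hy add1n => <-.
rewrite sum_nat_const HDx.
by case: k HDx {IH Hk}.
Qed.

End Comb.

Section Real.
Local Open Scope ring_scope.
Variable R : realType.
Variable T : finType.

Fixpoint Gn (j : nat) : R := match j with j'.+2 => Gn j' + 3 / (j'.+1)%:R | _ => 0 end.

Lemma Gn_ge0 j : 0 <= Gn j.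
Proof.
elim/ltn_ind: j => [[|[|j]]] IH //=.
by rewrite addr_ge0 ?IH // divr_ge0.
Qed.

Lemma GnS j : Gn j.+2 = Gn j + 3 / (j.+1)%:R. Proof. by []. Qed.

Lemma main_ineq (s : {perm T}) (D : {set T}) :
  \sum_(m in matchD D) (#|porbits (m * s)%g|)%:R <=
  (#|matchD D|)%:R * ((#|~: D|)%:R + Gn #|D| + (fixD s D)%:R / 2) :> R.
Proof.
move Hk: #|D| => k; elim/ltn_ind: k D s Hk => k IH D s Hk.
case: k IH Hk => [|k] IH Hk.
  have D0 : D = finset.set0 by apply/eqP; rewrite -cards_eq0 Hk.
  rewrite matchD0 // big_set1 mul1g cards1 mul1r /= addr0 D0 finset.setC0 cardsT.
  apply: (@le_trans _ _ (#|T|)%:R).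
    by rewrite ler_nat /porbits leq_imset_card.
  by rewrite lerDl divr_ge0.
have [x Hx] : exists x, x \in D by apply/set0Pn; rewrite -card_gt0 Hk.
rewrite (decomp _ _ Hx).
have HDx : #|D :\ x| = k by move: Hk; rewrite (cardsD1 x D) Hx add1n => -[].
case: k IH Hk HDx => [|k] IH Hk HDx.
  have -> : D :\ x = finset.set0 by apply/eqP; rewrite -cards_eq0 HDx.
  rewrite big_set0 mulr_ge0 // addr_ge0 ?divr_ge0 // addr_ge0 // Gn_ge0.
set N := cm k.
have Step1 : forall y, y \in D :\ x ->
   \sum_(m in matchD (D :\ x :\ y)) (#|porbits (tperm x y * m * s)%g|)%:R <=
   N%:R * (((#|~: D|)%:R + Gn k + (fixD s D)%:R / 2) +
     (2 * (s x == y) + 2 * (s y == x) + (s (s x) == y) + (s (s y) == x))%:R / 2) :> R.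
  move=> y Hy.
  have HD' : #|D :\ x :\ y| = k by move: HDx; rewrite (cardsD1 y (D :\ x)) Hy add1n => -[].
  have Hc : #|~: (D :\ x :\ y)| = (#|~: D| + 2)%N.
    have := cardsC (D :\ x :\ y); have := cardsC D; lia.
  have eqW : forall m, m \in matchD (D :\ x :\ y) ->
     (#|porbits (tperm x y * m * s)%g|)%:R = (#|porbits (m * sig3 s x y)%g|)%:R
        - ((s y != x) + (sig2 s x y y != y))%:R :> R.
    move=> m /matchDP[_ H2].
    have xn : x \notin D :\ x :\ y by rewrite !inE eqxx /= andbF.
    have yn : y \notin D :\ x :\ y by rewrite !inE eqxx.
    by rewrite -(W_decomp s (H2 x xn) (H2 y yn)) natrD addrK.
  rewrite (eq_bigr _ eqW) sumrB sumr_const card_matchD HD' -/N.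
  have IH' := IH k (leqW (ltnSn k)) (D :\ x :\ y) (sig3 s x y) HD'.
  rewrite card_matchD HD' -/N Hc in IH'.
  have SF := step_fix s Hx Hy.
  set F3 := fixD (sig3 s x y) (D :\ x :\ y) in SF IH' *.
  set F := fixD s D in SF *.
  set B := (2 * (s x == y) + 2 * (s y == x) + (s (s x) == y) + (s (s y) == x))%N in SF *.
  set E := ((s y != x) + (sig2 s x y y != y))%N in SF *.
  have SF' : (F3%:R + 4%:R <= F%:R + B%:R + 2%:R * E%:R :> R).
    by rewrite -natrM -!natrD ler_nat.
  apply: (le_trans (lerB IH' (lexx _))).
  have -> : E%:R *+ N = N%:R * E%:R :> R by rewrite mulr_natl.
  rewrite -mulrBr; apply: ler_wpM2l => //.
  lra.
apply: (le_trans (ler_sum _ Step1)).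
rewrite -mulr_sumr big_split /= sumr_const HDx -mulr_suml.
have SB := sumB s x (D :\ x); move: SB; rewrite -(ler_nat R) natr_sum => SB.
set C := (#|~: D|)%:R + Gn k + (fixD s D)%:R / 2.
set SS := \sum_(i in D :\ x) _ in SB *.
rewrite card_matchD Hk.
have KP : (k.+1)%:R != 0 :> R by rewrite pnatr_eq0.
have E1 : (N%:R * (C *+ k.+1 + SS / 2) = N%:R * ((k.+1)%:R * C) + N%:R * (SS / 2) :> R).
  by rewrite -(mulr_natl C); ring.
have E2 : ((cm k.+2)%:R * ((#|~: D|)%:R + (Gn k + 3 / (k.+1)%:R) + (fixD s D)%:R / 2)
   = N%:R * ((k.+1)%:R * C) + N%:R * 3 :> R).
  rewrite [cm _]/= natrM /C.
  have H3 : (k.+1)%:R * (3 / (k.+1)%:R) = 3 :> R by rewrite mulrC divfK.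
  move: H3; set Z := 3 / (k.+1)%:R => H3.
  rewrite -H3; ring.
rewrite E1 E2 lerD2l; apply: ler_wpM2l => //.
lra.
Qed.

Lemma ln_le_sub1 (x : R) : 0 < x -> ln x <= x - 1.
Proof.
move=> x0; have := expR_ge1Dx (ln x); rewrite lnK ?posrE //.
move=> h; lra.
Qed.

Lemma Gn_bound k : Gn (k.+1).*2 <= 3 + 3 / 2 * ln ((k.*2).+1)%:R.
Proof.
elim: k => [|k IH].
  by rewrite /= mulr1n ln1 mulr0 addr0 add0r divr1.
rewrite doubleS GnS.
set A : R := ((k.*2).+1)%:R in IH *.
have -> : ((k.+1).*2).+1 = ((k.*2).+1 + 2)%N by rewrite doubleS addn2.
rewrite natrD -/A.
set B : R := A + 2%:R.
have A0 : 0 < A by rewrite /A ltr0n.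
have B0 : 0 < B by rewrite /B addr_gt0.
have h0 : ln (A / B) <= A / B - 1 by apply: ln_le_sub1; rewrite divr_gt0.
rewrite ln_div ?posrE // in h0.
have h1 : A / B = 1 - 2 / B.
  rewrite /B; field; rewrite -/B; exact: lt0r_neq0.
have h2 : 3 / B = 3 / 2 * (2 / B) by rewrite mulrA -[3 / 2 * 2]mulrA mulVf // mulr1.

lra.
Qed.

End Real.

Section Final.
Local Open Scope ring_scope.

Definition rhof (n : nat) (c : side n) : side n := (c.1, ordS c.2).
Definition rhoi (n : nat) (c : side n) : side n := (c.1, ord_pred c.2).
Lemma rhofK n : cancel (@rhof n) (@rhoi n).
Proof. by case=> t i; rewrite /rhof /rhoi /= ordSK. Qed.
Definition rho n : {perm side n} := perm (can_inj (@rhofK n)).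
Lemma rhoE n c : rho n c = (c.1, ordS c.2).
Proof. by rewrite /rho permE. Qed.

Lemma glueE n (m : {perm side n}) c d : is_matching m ->
  glue_rel m c d = (d == (m * rho n)%g c) || (c == (m * rho n)%g d).
Proof.
move=> /forallP Hm.
have inv z : m (m z) = z by have /andP[_ /eqP] := Hm z.
rewrite /glue_rel !permM !rhoE.
apply/existsP/orP => [[[t i] /orP[/andP[/eqP -> /eqP ->]|/andP[/eqP -> /eqP ->]]]|[/eqP ->|/eqP ->]].
- by left.
- by right; rewrite -!surjective_pairing inv.
- by exists c; apply/orP; left; case: c => t i; rewrite /= !eqxx.
by exists (m d); apply/orP; right; rewrite inv -surjective_pairing !eqxx.
Qed.

Lemma connect_porbit n (m : {perm side n}) c d : is_matching m ->
  connect (sym_glue_rel m) c d = (d \in porbit (m * rho n)%g c).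
Proof.
move=> Hm; set phi := (m * rho n)%g.
have symE x y : sym_glue_rel m x y = (y == phi x) || (x == phi y).
  by rewrite /sym_glue_rel !glueE //; case: (_ == _); case: (_ == _).
apply/idP/idP.
  move/connectP => [p Hp ->]; elim: p c Hp => [|z p IHp] c /=; first by rewrite porbit_id.
  case/andP => e Hp; have := IHp z Hp.
  have -> : porbit phi z = porbit phi c; last by [].
  rewrite symE in e; case/orP: e => /eqP ->.
    by have := porbit_perm phi 1 c; rewrite expg1.
  by have := porbit_perm phi 1 z; rewrite expg1 => ->.
move/porbitP => [i ->]; elim: i => [|i IHi]; first by rewrite expg0 perm1 connect0.
apply: connect_trans IHi _; apply: connect1.
by rewrite symE expgSr permM eqxx.
Qed.

Lemma num_verticesE n (m : {perm side n}) : is_matching m ->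
  num_vertices m = #|porbits (m * rho n)%g|.
Proof.
move=> Hm; rewrite /num_vertices.
suff -> : vertices m = porbits (m * rho n)%g by [].
rewrite /vertices /porbits; apply: eq_imset => c; apply/setP => d.
by rewrite finset.in_set connect_porbit.
Qed.

Lemma matchingsE n : matchings n = matchD [set: side n].
Proof.
apply/setP => m; rewrite /matchings /matchD !finset.in_set /is_matching.
by apply: eq_forallb => z; rewrite finset.in_setT.
Qed.

Lemma fix_rho n : fixD (rho n) [set: side n] = 0%N.
Proof.
rewrite /fixD big1 // => [[t i]] _; rewrite rhoE /=.
apply/eqP; rewrite xpair_eqE eqxx /=.
by case: i => [[|[|[|]]] //] ?.
Qed.

End Final.

Theorem theorem2p1 (R : realType) (n : nat) (hn : ~~ odd n) :
  (expected_vertices R n <= 3 / 2 * ln (n%:R : R) + 6)%R.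
Proof.
have HE : (expected_vertices R n <= Gn R (n * 3))%R.
  rewrite /expected_vertices.
  rewrite (eq_bigr (fun m => (#|porbits (m * rho n)%g|)%:R)%R); last first.
    by move=> m; rewrite /matchings finset.in_set => Hm; rewrite num_verticesE.
  rewrite matchingsE.
  have M := main_ineq R (rho n) [set: side n].
  rewrite finset.setCT cards0 fix_rho cardsT card_prod !card_ord mul0r addr0 add0r in M.
  case: (eqVneq #|matchD [set: side n]| 0%N) => [->|M0].
    by rewrite invr0 mulr0 Gn_ge0.
  rewrite ler_pdivrMr ?ltr0n ?lt0n // mulrC //.
case: n hn HE => [|n] hn HE.
  apply: (le_trans HE); rewrite /= ln0 // mulr0 add0r; lra.
have ev : (n.+1 * 3 = ((n.+1 * 3)./2).*2)%N.
  have := odd_double_half (n.+1 * 3); rewrite oddM (negbTE hn) /= add0n.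
  by move=> ->.
move: ev HE; case Hh : ((n.+1 * 3)./2) => [|k] ev HE; first by lia.
rewrite ev in HE; apply: (le_trans HE); apply: (le_trans (Gn_bound R k)).
have Hle : ((k.*2).+1 <= n.+1 * 3)%N by rewrite ev doubleS.
have p1 : ((((k.*2).+1)%:R : R) \in Num.pos)%R by rewrite posrE ltr0n.
have p2 : (((n.+1)%:R : R) \in Num.pos)%R by rewrite posrE ltr0n.
have p3 : ((3 : R) \in Num.pos)%R by rewrite posrE.
have L1 : (ln ((k.*2).+1)%:R <= ln ((n.+1)%:R * 3) :> R)%R.
  rewrite ler_ln //; last by rewrite posrE mulr_gt0.
  by rewrite -natrM ler_nat.
rewrite lnM // in L1.
have L3 := @ln_le_sub1 R 3%R ltac:(by []).
lra.
Qed.
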